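(* Every search game (as defined in the context) admits a pure (Bayesian) Nash equilibrium.
   Context: A search game $G=(N,\Omega,\Pi,\mu,K,c,v)$ consists of: a finite set of players $N=\{1,\ldots,n\}$; a finite set $\Omega$ of locations; for each player $i$ a partition $\Pi_i$ of $\Omega$, with $\pi_i(\omega)$ the cell containing $\omega$; a common prior $\mu\in\Delta(\Omega)$ with $\mu(\pi_i)>0$ for every cell of every player; capacities $K_i\in\mathbb{N}$; costs $c_i:\{0,\ldots,K_i\}\to\mathbb{R}_{\ge0}$ with $c_i(0)=0$ and nondecreasing increments $c_i(k+1)-c_i(k)\ge c_i(k)-c_i(k-1)$; rewards $v_i^m(\omega)\ge0$ weakly decreasing in $m$; social values $v_{\mathfrak{s}}(\omega)\ge0$. A pure strategy $s_i$ assigns to each cell $\pi_i$ a subset $s_i(\pi_i)\subseteq\pi_i$ of size at most $K_i$. With $m_s(\omega)=\sum_{i}\mathbf{1}_{\omega\in s_i(\pi_i(\omega))}$, player $i$'s payoff is $u_i(s)=\sum_{\omega}\mu(\omega)\big[\mathbf{1}_{\omega\in s_i(\pi_i(\omega))}v_i^{m_s(\omega)}(\omega)-c_i(|s_i(\pi_i(\omega))|)\big]$. A pure Nash equilibrium is a pure profile $s$ with $u_i(s)\ge u_i(s_i',s_{-i})$ for all $i$ and all pure $s_i'$. *)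

(* Defs.v *)
From HB Require Import structures.
From mathcomp Require Import all_boot all_order all_algebra.
Set Implicit Arguments. Unset Strict Implicit. Unset Printing Implicit Defensive.
Import Order.TTheory GRing.Theory Num.Theory.
Local Open Scope ring_scope.

Section SearchGame.
Variables (R : realFieldType) (n : nat) (Omega : finType).

(* A (pure) strategy profile: for each player i and each cell C of Pi_i,
   the chosen subset s i C of C.  Values on non-cells are irrelevant. *)
Definition profile := 'I_n -> {set Omega} -> {set Omega}.

Definition cell (P : 'I_n -> {set {set Omega}}) (i : 'I_n) (w : Omega) :=
  pblock (P i) w.

Definition admissible (P : 'I_n -> {set {set Omega}}) (K : 'I_n -> nat)
  (i : 'I_n) (si : {set Omega} -> {set Omega}) : Prop :=
  forall C, C \in P i -> (si C \subset C) /\ (#|si C| <= K i)%N.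

Definition admissible_profile P K (s : profile) : Prop :=
  forall i, admissible P K i (s i).

Definition nsearch (P : 'I_n -> {set {set Omega}}) (s : profile) (w : Omega) : nat :=
  (\sum_(j < n) (w \in s j (cell P j w)))%N.

Definition payoff (P : 'I_n -> {set {set Omega}}) (mu : Omega -> R)
  (c : 'I_n -> nat -> R) (v : 'I_n -> nat -> Omega -> R)
  (s : profile) (i : 'I_n) : R :=
  \sum_(w : Omega) mu w *
    ((w \in s i (cell P i w))%:R * v i (nsearch P s w) w
     - c i #|s i (cell P i w)|).

Definition deviate (s : profile) (i : 'I_n) (si : {set Omega} -> {set Omega})
  : profile := fun j => if j == i then si else s j.

Definition pure_NE P K mu c v (s : profile) : Prop :=
  admissible_profile P K s /\
  forall i si, admissible P K i si ->
    payoff P mu c v (deviate s i si) i <= payoff P mu c v s i.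

End SearchGame.

(* Main.v *)
Require Import Defs.
From HB Require Import structures.
From mathcomp Require Import all_boot all_order all_algebra.
From mathcomp Require Import zify ring lra.
From Stdlib Require Import Classical FunctionalExtensionality.
Notation funext := functional_extensionality.
Import Order.TTheory GRing.Theory Num.Theory.
Local Open Scope ring_scope.
Set Implicit Arguments. Unset Strict Implicit.

Section Single.
Variables (R : realFieldType) (W : finType).

Definition V (phi : W -> R) (h : nat -> R) (T : {set W}) :=
  \sum_(w in T) phi w - h #|T|.

Definition opt (Dm : {set W}) (k : nat) (phi : W -> R) (h : nat -> R) (S : {set W}) :=
  [/\ S \subset Dm, (#|S| <= k)%N &
    forall T : {set W}, T \subset Dm -> (#|T| <= k)%N -> V phi h T <= V phi h S].

Lemma opt_mono Dm k phi phi' h S : opt Dm k phi h S ->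
  (forall w, w \in S -> phi w <= phi' w) ->
  (forall w, w \notin S -> phi' w <= phi w) -> opt Dm k phi' h S.
Proof.
case=> sS cS HS H1 H2; split=> // T sT cT.
have := HS T sT cT; rewrite /V => HT.
have E : forall U : {set W}, \sum_(w in U) phi' w =
   \sum_(w in U) phi w + \sum_(w in U) (phi' w - phi w).
  by move=> U; rewrite -big_split /=; apply: eq_bigr => w _; rewrite addrC subrK.
rewrite !E.
have : \sum_(w in T) (phi' w - phi w) <= \sum_(w in S) (phi' w - phi w).
  rewrite [X in X <= _]big_mkcond [X in _ <= X]big_mkcond /=.
  apply: ler_sum => w _.
  case: (boolP (w \in S)) => wS; case: (w \in T).
  - by [].
  - by rewrite subr_ge0 H1.
  - by rewrite subr_le0 H2.
  - by [].
lra.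
Qed.

Lemma opt_exists Dm k phi h : exists T, opt Dm k phi h T.
Proof.
have P0 : (set0 \subset Dm) && (#|@set0 W| <= k)%N by rewrite sub0set cards0.
case: (@arg_maxP _ _ _ set0 (fun T : {set W} => (T \subset Dm) && (#|T| <= k)%N) (fun T : {set W} => V phi h T) P0) => T /andP[sT cT] HT.
exists T; split=> // U sU cU; apply: HT; by rewrite sU cU.
Qed.

Variable kk : nat.
Variable h : nat -> R.
Hypothesis hconv : forall j k, (0 < j)%N -> (j <= k)%N -> (k <= kk)%N ->
  h j - h j.-1 <= h k - h k.-1.

Lemma V_D1 phi (S : {set W}) x : x \in S -> V phi h S = V phi h (S :\ x) + phi x - (h #|S| - h #|S|.-1).
Proof.
move=> xS; rewrite /V (big_setD1 _ xS) /= (cardsD1 x S) xS /=.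
rewrite add1n /=; lra.
Qed.

Lemma V_U1 phi (S : {set W}) y : y \notin S -> V phi h (y |: S) = V phi h S + phi y - (h #|S|.+1 - h #|S|).
Proof.
move=> yS; rewrite /V (big_setU1 _ yS) /= (cardsU1 y S) yS /= add1n; lra.
Qed.

Lemma perturb Dm k psi phi (S : {set W}) x : (k <= kk)%N ->
  opt Dm k psi h S -> x \in S -> (forall w, w != x -> phi w = psi w) ->
  phi x <= psi x -> ~ opt Dm k phi h S ->
  opt Dm k phi h (S :\ x) \/
  exists2 y, y \notin S & (opt Dm k phi h (y |: (S :\ x)) /\ phi x < phi y).
Proof.
move=> kkk [sS cS HS] xS Eq lex nopt.
have [T0 [sT0 cT0 HT0]] := opt_exists Dm k phi h.
have lt0 : V phi h S < V phi h T0.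
  rewrite ltNge; apply/negP => le0; apply: nopt; split=> // U sU cU.
  exact: le_trans (HT0 U sU cU) le0.
have Vfree : forall U : {set W}, x \notin U -> V phi h U = V psi h U.
  move=> U xU; rewrite /V; congr (_ - _); apply: eq_bigr => w wU.
  by apply: Eq; apply: contraNneq xU => <-.
have VS : V phi h S = V psi h S - (psi x - phi x).
  rewrite !(V_D1 _ xS) Vfree ?setD11 //; lra.
have xT0 : x \notin T0.
  apply/negP => xT0; move: lt0; rewrite VS.
  have -> : V phi h T0 = V psi h T0 - (psi x - phi x).
    rewrite !(V_D1 _ xT0) Vfree ?setD11 //; lra.
  have := HS T0 sT0 cT0; lra.
have cS1 : #|S| = (#|S :\ x|).+1 by rewrite (cardsD1 x S) xS.
case: (ltnP #|T0| #|S|) => cmp.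
- left.
  have sS1 : S :\ x \subset Dm by apply: subset_trans sS; apply: subD1set.
  have cS1' : (#|S :\ x| <= k)%N by move: cS; rewrite cS1; lia.
  split=> // U sU cU.
  apply: le_trans (HT0 U sU cU) _.
  rewrite Vfree // Vfree ?setD11 //.
  have sx : x |: T0 \subset Dm by rewrite subUset sub1set (subsetP sS) // sT0.
  have cx : (#|x |: T0| <= k)%N by rewrite cardsU1 xT0 add1n; apply: leq_trans cS.
  have := HS _ sx cx.
  rewrite (V_U1 _ xT0) (V_D1 _ xS).
  have := hconv (j := #|T0|.+1) (k := #|S|) (ltn0Sn _) cmp (leq_trans cS kkk).
  rewrite /=. lra.
- right.
  have [y yT yS] : exists2 y, y \in T0 & y \notin S.
    apply/exists_inP; rewrite -negb_forall_in; apply/negP => /forall_inP sub.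
    have : T0 \subset S :\ x.
      apply/subsetP => w wT; rewrite in_setD1 sub // andbT.
      by apply: contraNneq xT0 => <-.
    move/subset_leq_card => le1; move: cmp; rewrite cS1; lia.
  have yx : y != x by apply: contraNneq xT0 => <-.
  have ySx : y \notin S :\ x by rewrite in_setD1 (negPf yS) andbF.
  have xS' : x \notin y |: (S :\ x) by rewrite in_setU1 eq_sym (negPf yx) setD11.
  have key : V psi h T0 <= V psi h (y |: (S :\ x)).
    have sU : x |: (T0 :\ y) \subset Dm.
      rewrite subUset sub1set (subsetP sS) //=; apply: subset_trans sT0; apply: subD1set.
    have xTy : x \notin T0 :\ y by rewrite in_setD1 (negPf xT0) andbF.
    have cU : (#|x |: (T0 :\ y)| <= k)%N.
      by move: cT0; rewrite cardsU1 xTy (cardsD1 y T0) yT; lia.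
    have := HS _ sU cU.
    rewrite (V_U1 _ xTy) (V_D1 _ xS) (V_U1 _ ySx) (V_D1 _ yT).
    have -> : #|T0| = (#|T0 :\ y|).+1 by rewrite (cardsD1 y T0) yT.
    rewrite cS1 /=; lra.
  have Vnew : V phi h (y |: (S :\ x)) = V psi h (y |: (S :\ x)) by rewrite Vfree.
  have optn : opt Dm k phi h (y |: (S :\ x)).
    split.
    + rewrite subUset sub1set (subsetP sT0) //=; apply: subset_trans sS; apply: subD1set.
    + by rewrite cardsU1 ySx add1n -cS1.
    + move=> U sU cU; apply: le_trans (HT0 U sU cU) _; rewrite Vnew (Vfree T0) //.
  apply: (ex_intro2 _ _ y) => //; split => //.
  have : V phi h S < V phi h (y |: (S :\ x)).
    apply: lt_le_trans lt0 _; rewrite Vnew (Vfree T0) //.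
  rewrite (V_U1 _ ySx) (V_D1 _ xS) cS1 /=.
  lra.
Qed.

Lemma grow Dm k psi (S : {set W}) : (k.+1 <= kk)%N ->
  opt Dm k psi h S ->
  opt Dm k.+1 psi h S \/ exists2 y, y \notin S & opt Dm k.+1 psi h (y |: S).
Proof.
move=> kk1 [sS cS HS].
have [T0 [sT0 cT0 HT0]] := opt_exists Dm k.+1 psi h.
case: (leqP #|T0| k) => cmp.
- left; split=> //; first exact: leqW.
  move=> U sU cU; apply: le_trans (HT0 U sU cU) _; exact: HS.
- right.
  have [y yT yS] : exists2 y, y \in T0 & y \notin S.
    apply/exists_inP; rewrite -negb_forall_in; apply/negP => /forall_inP sub.
    have : T0 \subset S by apply/subsetP.
    move/subset_leq_card => le1.
    by move: (leq_trans cmp (leq_trans le1 cS)); rewrite ltnn.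
  exists y => //; split.
  + by rewrite subUset sub1set (subsetP sT0).
  + by rewrite cardsU1 yS add1n.
  + move=> U sU cU; apply: le_trans (HT0 U sU cU) _.
    have sU' : T0 :\ y \subset Dm by apply: subset_trans sT0; apply: subD1set.
    have cT0e : #|T0| = (#|T0 :\ y|).+1 by rewrite (cardsD1 y T0) yT.
    have cU' : (#|T0 :\ y| <= k)%N by rewrite -ltnS -cT0e.
    have := HS _ sU' cU'.
    rewrite (V_D1 _ yT) (V_U1 _ yS) cT0e /=.
    have : h #|S|.+1 - h #|S| <= h (#|T0 :\ y|).+1 - h #|T0 :\ y|.
      have := hconv (j := #|S|.+1) (k := (#|T0 :\ y|).+1) (ltn0Sn _).
      rewrite /=; apply; first by move: cS cmp; rewrite cT0e; lia.
      by move: cT0 kk1; rewrite cT0e; lia.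
    lra.
Qed.

End Single.

Section Multi.
Variables (R : realFieldType) (W A : finType).
Variables (D : A -> {set W}) (Kmax : A -> nat) (g : A -> nat -> R) (f : A -> W -> nat -> R).
Hypothesis gconv : forall a j k, (0 < j)%N -> (j <= k)%N -> (k <= Kmax a)%N ->
  g a j - g a j.-1 <= g a k - g a k.-1.
Hypothesis fdec : forall a w m, f a w m.+1 <= f a w m.

Lemma fmono a w k m : (k <= m)%N -> f a w m <= f a w k.
Proof.
move/subnK <-; elim: (m - k)%N => [|d IH]; first by rewrite add0n.
rewrite addSn; exact: le_trans (fdec _ _ _) IH.
Qed.

Definition cfg := {ffun A -> {set W}}.
Definition cong (s : cfg) w : nat := (\sum_(a : A) (w \in s a))%N.
Definition congm (s : cfg) a w : nat := (\sum_(b | b != a) (w \in s b))%N.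
Definition phiA (s : cfg) a w := f a w (congm s a w).+1.
Definition NE (kap : A -> nat) (s : cfg) := forall a, opt (D a) (kap a) (phiA s a) (g a) (s a).
Definition psi0 (m0 : W -> nat) (s : cfg) a w := f a w (m0 w + (w \notin s a))%N.
Definition Jc kap m0 (s : cfg) := forall a, opt (D a) (kap a) (psi0 m0 s a) (g a) (s a).
Definition upd (s : cfg) a (T : {set W}) : cfg := [ffun b => if b == a then T else s b].

Lemma cong_split s a w : cong s w = ((w \in s a) + congm s a w)%N.
Proof. by rewrite /cong (bigD1 a). Qed.

Lemma phiA_cong s a w : phiA s a w = f a w (cong s w + (w \notin s a))%N.
Proof. by rewrite /phiA (cong_split s a w); case: (w \in s a); rewrite /= ?add1n ?addn0 ?add0n ?addn1. Qed.

Lemma upd_same s a T : upd s a T a = T.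
Proof. by rewrite /upd ffunE eqxx. Qed.

Lemma upd_other s a T b : b != a -> upd s a T b = s b.
Proof. by move=> ba; rewrite /upd ffunE (negPf ba). Qed.

Lemma congm_upd s a T w : congm (upd s a T) a w = congm s a w.
Proof. by apply: eq_bigr => b ba; rewrite upd_other. Qed.

Lemma cong_upd s a T w : (cong (upd s a T) w + (w \in s a) = cong s w + (w \in T))%N.
Proof.
rewrite (cong_split (upd s a T) a w) (cong_split s a w) congm_upd upd_same; lia.
Qed.

Lemma Jc_other kap m0 s a T b : Jc kap m0 s -> b != a ->
  opt (D b) (kap b) (psi0 m0 (upd s a T) b) (g b) (upd s a T b).
Proof.
move=> J ba; rewrite upd_other //.
have -> : psi0 m0 (upd s a T) b = psi0 m0 s b.
  by apply: funext => w; rewrite /psi0 upd_other.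
exact: J.
Qed.

Lemma NE_of_J0 kap m0 s : Jc kap m0 s -> cong s =1 m0 -> NE kap s.
Proof.
move=> J E a.
have -> : phiA s a = psi0 m0 s a by apply: funext => w; rewrite phiA_cong /psi0 E.
exact: J.
Qed.

Lemma hot_happy kap m0 s x a : Jc kap m0 s ->
  (forall w, cong s w = m0 w + (w == x))%N -> x \notin s a ->
  opt (D a) (kap a) (phiA s a) (g a) (s a).
Proof.
move=> J E xS; apply: opt_mono (J a) _ _ => w wS; rewrite phiA_cong /psi0 E; apply: fmono.
- have -> : (w == x) = false by apply/negP => /eqP ewx; rewrite -ewx wS in xS.
  rewrite wS /=; lia.
- rewrite wS; case: (w == x) => /=; lia.
Qed.

Definition Phi m0 (s : cfg) := \sum_(a : A) \sum_(w in s a) f a w (m0 w).+1.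

Lemma Phi_upd m0 s b T : Phi m0 (upd s b T) + \sum_(w in s b) f b w (m0 w).+1 =
   Phi m0 s + \sum_(w in T) f b w (m0 w).+1.
Proof.
rewrite /Phi (bigD1 b) //= [in RHS](bigD1 b) //= upd_same.
have -> : \sum_(i | i != b) \sum_(w in upd s b T i) f i w (m0 w).+1 =
          \sum_(i | i != b) \sum_(w in s i) f i w (m0 w).+1.
  by apply: eq_bigr => i ib; rewrite upd_other.
lra.
Qed.

Lemma main kap m0 : (forall a, kap a <= Kmax a)%N -> forall s, Jc kap m0 s ->
  (cong s =1 m0 \/ exists x, forall w, cong s w = (m0 w + (w == x))%N) ->
  exists s', NE kap s'.
Proof.
move=> kapK.
pose N s := #|[set t : cfg | Phi m0 s < Phi m0 t]|.
suff H : forall k s, (N s < k)%N -> Jc kap m0 s ->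
  (cong s =1 m0 \/ exists x, forall w, cong s w = (m0 w + (w == x))%N) ->
  exists s', NE kap s'.
  by move=> s; apply: (H (N s).+1).
elim=> [//|k IH] s Nk J [E|[x E]].
  by exists s; exact: NE_of_J0 E.
case: (classic (NE kap s)) => [H|H]; first by exists s.
have [b nb] : exists b, ~ opt (D b) (kap b) (phiA s b) (g b) (s b).
  by apply: not_all_ex_not.
have xb : x \in s b.
  by apply: contraT => xS; case: nb; exact: hot_happy J E xS.
have Eq : forall w, w != x -> phiA s b w = psi0 m0 s b w.
  by move=> w wx; rewrite phiA_cong /psi0 E (negPf wx) addn0.
have lex : phiA s b x <= psi0 m0 s b x.
  by rewrite phiA_cong /psi0 E eqxx xb /= !addn0 addn1; exact: fdec.
case: (perturb (gconv (a := b)) (kapK b) (J b) xb Eq lex nb) => [opt1|[y yS [opt2 lxy]]].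
-
  exists (upd s b (s b :\ x)).
  apply: (@NE_of_J0 kap m0).
  + move=> a; case: (eqVneq a b) => [->|ab]; last exact: Jc_other.
    rewrite upd_same.
    have -> : psi0 m0 (upd s b (s b :\ x)) b = phiA s b.
      apply: funext => w; rewrite /psi0 upd_same phiA_cong E in_setD1.
      by case: (eqVneq w x) => [->|wx]; rewrite ?xb /= ?addn0 ?addn1.
    exact: opt1.
  + move=> w; have := cong_upd s b (s b :\ x) w; rewrite E in_setD1.
    by case: (eqVneq w x) => [->|wx]; rewrite ?xb /=; lia.
-
  have yx : y != x by apply: contraNneq yS => ->.
  set s' := upd s b (y |: (s b :\ x)).
  have Phis : Phi m0 s < Phi m0 s'.
    have := Phi_upd m0 s b (y |: (s b :\ x)).
    have ySx : y \notin s b :\ x by rewrite in_setD1 (negPf yS) andbF.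
    rewrite (big_setU1 _ ySx) (big_setD1 _ xb) /=.
    move: lxy; rewrite !phiA_cong !E eqxx xb (negPf yx) (negPf yS) /= addn0 !addn1.
    rewrite -/s' ?addn0; lra.
  apply: (IH s').
  + rewrite -ltnS; apply: leq_trans Nk; rewrite ltnS.
    apply: proper_card; apply/properP; split.
      apply/subsetP => t; rewrite !inE => lt; exact: lt_trans Phis lt.
    by exists s'; rewrite !inE ?ltxx.
  + move=> a; case: (eqVneq a b) => [->|ab]; last exact: Jc_other.
    rewrite /s' upd_same.
    apply: opt_mono opt2 _ _ => w; rewrite /psi0 upd_same phiA_cong E !in_setU1 in_setD1 => wT; apply: fmono.
    * move: wT; case: (eqVneq w y) => [->|wy] /=.
        by rewrite (negPf yx) (negPf yS) /=; lia.
      case: (eqVneq w x) => [->|wx] //= wS.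
      by rewrite wS /=; lia.
    * move: wT; case: (eqVneq w y) => [->|wy] //=.
      case: (eqVneq w x) => [->|wx] /=; first by rewrite xb /=; lia.
      by case: (w \in s b) => /=; lia.
  + right; exists y => w; have := cong_upd s b (y |: (s b :\ x)) w.
    rewrite -/s' E in_setU1 in_setD1.
    case: (eqVneq w y) => [->|wy] /=.
      by rewrite (negPf yx) (negPf yS); lia.
    case: (eqVneq w x) => [->|wx] /=; first by rewrite xb; lia.
    by lia.
Qed.

Lemma exists_NE kap : (forall a, kap a <= Kmax a)%N -> exists s, NE kap s.
Proof.
suff H : forall k kap, (\sum_(a : A) kap a)%N = k -> (forall a, kap a <= Kmax a)%N ->
  exists s, NE kap s by exact: H.
elim=> [|k IH] {}kap Sk kapK.
- have k0 : forall a, kap a = 0%N.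
    move=> a; apply/eqP; move/eqP: Sk; rewrite sum_nat_eq0 => /forallP /(_ a).
    by [].
  exists [ffun => set0] => a; rewrite ffunE k0; split.
  + exact: sub0set.
  + by rewrite cards0.
  + by move=> T _; rewrite leqn0 cards_eq0 => /eqP ->.
- have [a ka] : exists a, (0 < kap a)%N.
    apply/existsP; apply: contraT; rewrite negb_exists => /forallP H0.
    move: Sk; rewrite big1 // => a _; by move: (H0 a); rewrite lt0n negbK => /eqP.
  pose kap' b := if b == a then (kap a).-1 else kap b.
  have Sk' : (\sum_(b : A) kap' b)%N = k.
    rewrite (bigD1 a) //= /kap' eqxx.
    rewrite (eq_bigr kap); last by move=> i ia; rewrite (negPf ia).
    move: Sk; rewrite (bigD1 a) //=; lia.
  have kapK' : forall b, (kap' b <= Kmax b)%N.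
    move=> b; rewrite /kap'; case: (eqVneq b a) => [->|_]; last exact: kapK.
    by move: (kapK a); lia.
  have [s NEs] := IH kap' Sk' kapK'.
  pose m0 := cong s.
  have Ps : forall b, psi0 m0 s b = phiA s b.
    by move=> b; apply: funext => w; rewrite phiA_cong.
  have Jo : forall b, b != a -> opt (D b) (kap b) (psi0 m0 s b) (g b) (s b).
    by move=> b ba; rewrite Ps; have := NEs b; rewrite /kap' (negPf ba).
  have Ja : opt (D a) (kap a).-1 (psi0 m0 s a) (g a) (s a).
    by rewrite Ps; have := NEs a; rewrite /kap' eqxx.
  have kaS : kap a = (kap a).-1.+1 by rewrite prednK.
  have kaK : ((kap a).-1.+1 <= Kmax a)%N by rewrite -kaS.
  case: (grow (gconv (a := a)) kaK Ja) => [opt1|[y yS opt2]].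
  + apply: (@main kap m0 kapK s); last by left.
    move=> b; case: (eqVneq b a) => [->|ba]; first by rewrite kaS.
    exact: Jo.
  + apply: (@main kap m0 kapK (upd s a (y |: s a))).
    * move=> b; case: (eqVneq b a) => [->|ba].
        rewrite upd_same kaS.
        apply: opt_mono opt2 _ _ => w; rewrite /psi0 upd_same !in_setU1 => wT; apply: fmono.
          move: wT; case: (eqVneq w y) => [->|wy] /=.
            by rewrite (negPf yS) /=; lia.
          by move=> ->; lia.
        move: wT; case: (eqVneq w y) => [->|wy] //=.
      have E1 : upd s a (y |: s a) b = s b by rewrite /upd ffunE (negPf ba).
      have -> : psi0 m0 (upd s a (y |: s a)) b = psi0 m0 s b.
        by apply: funext => w; rewrite /psi0 E1.
      rewrite E1; exact: Jo.
    * right; exists y => w; have := cong_upd s a (y |: s a) w.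
      rewrite in_setU1 /m0.
      case: (eqVneq w y) => [->|wy] /=; first by rewrite (negPf yS); lia.
      by lia.
Qed.

End Multi.

Unset Implicit Arguments.
Definition clamp (n m : nat) := maxn 1 (minn m n).

Lemma clampE n m : (1 <= m)%N -> (m <= n)%N -> clamp n m = m.
Proof. rewrite /clamp; lia. Qed.

Theorem corollary1 (R : realFieldType) (n : nat) (Omega : finType)
  (P : 'I_n -> {set {set Omega}})
  (mu : Omega -> R) (K : 'I_n -> nat) (c : 'I_n -> nat -> R)
  (v : 'I_n -> nat -> Omega -> R) (vs : Omega -> R) :
  (forall i, partition (P i) [set: Omega]) ->
  (forall w, 0 <= mu w) -> \sum_(w : Omega) mu w = 1 ->
  (forall i C, C \in P i -> 0 < \sum_(w in C) mu w) ->
  (forall i, c i 0%N = 0) ->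
  (forall i k, (k <= K i)%N -> 0 <= c i k) ->
  (forall i k, (1 <= k)%N -> (k < K i)%N ->
     c i k - c i k.-1 <= c i k.+1 - c i k) ->
  (forall i m w, (1 <= m <= n)%N -> 0 <= v i m w) ->
  (forall i m w, (1 <= m)%N -> (m < n)%N -> v i m.+1 w <= v i m w) ->
  (forall w, 0 <= vs w) ->
  exists s : profile n Omega, pure_NE P K mu c v s.
Proof.
move=> partP mu0 _ _ _ _ cconv _ vdec _.
pose A := ('I_n * {set Omega})%type.
pose D (a : A) := if a.2 \in P a.1 then a.2 else set0.
pose Km (a : A) := K a.1.
pose g (a : A) k := (\sum_(w in a.2) mu w) * c a.1 k.
pose f (a : A) w m := mu w * v a.1 (clamp n m) w.
have cmono : forall i j k, (0 < j)%N -> (j <= k)%N -> (k <= K i)%N ->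
    c i j - c i j.-1 <= c i k - c i k.-1.
  move=> i j k j0 /subnK <-; elim: (k - j)%N => [|d IH]; first by rewrite add0n.
  move=> Kd; apply: le_trans (IH _) _; first by move: Kd; lia.
  rewrite addSn /=; apply: cconv; lia.
have gconv : forall a j k, (0 < j)%N -> (j <= k)%N -> (k <= Km a)%N ->
    g a j - g a j.-1 <= g a k - g a k.-1.
  move=> a j k j0 jk kK; rewrite /g -!mulrBr; apply: ler_wpM2l.
    by apply: sumr_ge0 => w _; exact: mu0.
  exact: cmono.
have fdec : forall a w m, f a w m.+1 <= f a w m.
  move=> a w m; rewrite /f; apply: ler_wpM2l; first exact: mu0.
  have [->|[m1 [mn [-> ->]]]] :
      clamp n m.+1 = clamp n m \/ (1 <= m /\ m < n /\ clamp n m.+1 = m.+1 /\ clamp n m = m)%N.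
    rewrite /clamp; lia.
    by [].
  exact: vdec.
have [sg NEs] := @exists_NE R Omega A D Km g f gconv fdec Km (fun a => leqnn _).
pose s : profile n Omega := fun i C => sg (i, C).
exists s.
have trivP : forall i, trivIset (P i) by move=> i; case/and3P: (partP i).
have coverP : forall i, cover (P i) = [set: Omega] by move=> i; case/and3P: (partP i) => /eqP.
have valid : forall j C w, w \in sg (j, C) -> C \in P j /\ cell P j w = C.
  move=> j C w wS; case: (NEs (j, C)) => sub _ _.
  have := subsetP sub w wS; rewrite /D /=; case: ifP => CP; last by rewrite inE.
  by move=> wC; split => //; rewrite /cell (def_pblock (trivP j) CP wC).
have collapse : forall j w, (\sum_(C : {set Omega}) (w \in sg (j, C)))%N = (w \in sg (j, cell P j w)).
  move=> j w; rewrite (bigD1 (cell P j w)) //= big1 ?addn0 // => C CP.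
  case: (boolP (w \in sg (j, C))) => // wS; have [_ e] := valid _ _ _ wS; by rewrite e eqxx in CP.
have cong_eq : forall w, cong sg w = nsearch P s w.
  move=> w; rewrite /cong /nsearch.
  rewrite -[in RHS](eq_bigr _ (fun j _ => collapse j w)) pair_bigA /=.
  by apply: eq_bigr => -[j C].
have nsearch_le : forall (t : profile n Omega) w, (nsearch P t w <= n)%N.
  move=> t w; rewrite /nsearch.
  apply: (leq_trans (n := (\sum_(j < n) 1)%N)); first by apply: leq_sum => j _; exact: leq_b1.
  by rewrite sum1_card card_ord.
have formula : forall i (s' : profile n Omega),
    (forall j C, j != i -> s' j C = sg (j, C)) -> admissible P K i (s' i) ->
    payoff P mu c v s' i = \sum_(C in P i) V (phiA f sg (i, C)) (g (i, C)) (s' i C).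
  move=> i s' Hs' adm; rewrite /payoff.
  rewrite (eq_bigl (fun w => w \in cover (P i))); last by move=> w; rewrite coverP inE.
  rewrite big_trivIset //; apply: eq_bigr => C CP.
  have [subT _] := adm C CP.
  set T := s' i C.
  have cellC : forall w, w \in C -> cell P i w = C.
    by move=> w wC; rewrite /cell (def_pblock (trivP i) CP wC).
  have ns : forall w, w \in T -> nsearch P s' w = (congm sg (i, C) w).+1.
    move=> w wT; have wC := subsetP subT w wT.
    have e1 := cong_split sg (i, C) w.
    rewrite cong_eq /nsearch (bigD1 i) //= (cellC _ wC) in e1.
    rewrite /nsearch (bigD1 i) //= (cellC _ wC).
    under eq_bigr => j ji do rewrite (Hs' _ _ ji).
    have -> : (w \in s' i C) = true by [].
    move: e1; rewrite /s /=; lia.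
  rewrite (eq_bigr (fun w => mu w * ((w \in T)%:R * v i (nsearch P s' w) w - c i #|T|)));
    last by move=> w wC; rewrite (cellC _ wC).
  rewrite /V /g /=.
  under eq_bigr do rewrite mulrBr.
  rewrite sumrB -mulr_suml; congr (_ - _).
  rewrite [LHS]big_mkcond [RHS]big_mkcond; apply: eq_bigr => w _ /=.
  case: (boolP (w \in T)) => wT.
  - rewrite (subsetP subT w wT) mul1r /phiA /f /= -(ns w wT) clampE //.
      by rewrite ns.
  - by rewrite mul0r mulr0; case: (w \in C).
have adm_s : forall i, admissible P K i (s i).
  move=> i C CP; case: (NEs (i, C)) => sub card _.
  by rewrite /s; move: sub; rewrite /D /= CP.
split; first by move=> i; exact: adm_s.
move=> i si admi.
rewrite (formula i (deviate s i si)); first last.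
- by rewrite /deviate eqxx.
- by move=> j C ji; rewrite /deviate (negPf ji).
rewrite (formula i s (fun j C _ => erefl) (adm_s i)).
apply: ler_sum => C CP.
rewrite /deviate eqxx.
case: (NEs (i, C)) => _ _ H; apply: H.
- by rewrite /D /= CP; case: (admi C CP).
- by case: (admi C CP).
Qed.
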